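(* Let $E$ be a second countable Stone space with at least four points. Then $E$ admits a pants decomposition.
   Context: A Stone space is a compact, Hausdorff, totally disconnected space. A cut of $E$ is an unordered partition of $E$ into two disjoint clopen sets $U,V$, written $U\sqcup V$; it is non-peripheral if each of $U,V$ contains at least two points. Two cuts $U\sqcup V$, $U'\sqcup V'$ cross if all four sets $U\cap U'$, $U\cap V'$, $V\cap U'$, $V\cap V'$ are nonempty; otherwise they are compatible. A pants decomposition of $E$ is a countable (finite or countably infinite) collection $\Gamma=\{\gamma_n\}$ of non-peripheral cuts such that: (1) any two cuts in $\Gamma$ are compatible; (2) every non-peripheral cut $\gamma\notin\Gamma$ crosses some cut of $\Gamma$; (3) for every non-peripheral cut $\gamma\notin\Gamma$, the set of $\gamma_j\in\Gamma$ crossing $\gamma$ is finite. *)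

(* Defs.v *)
From HB Require Import structures.
From mathcomp Require Import all_boot all_order.
From mathcomp Require Import boolp classical_sets functions cardinality topology.
Set Implicit Arguments. Unset Strict Implicit. Unset Printing Implicit Defensive.
Local Open Scope classical_set_scope.

Section Cuts.
Context {T : topologicalType}.

Definition stone_space : Prop :=
  [/\ compact [set: T], hausdorff_space T & totally_disconnected [set: T]].

Definition is_cut (g : set (set T)) : Prop :=
  exists U V : set T, [/\ clopen U, clopen V, U `&` V = set0,
                          U `|` V = [set: T] & g = [set U; V]].

Definition has_two_points (A : set T) : Prop :=
  exists x y, [/\ A x, A y & x <> y].

Definition nonperipheral_cut (g : set (set T)) : Prop :=
  is_cut g /\ forall W, g W -> has_two_points W.

Definition cross (g h : set (set T)) : Prop :=
  forall W W', g W -> h W' -> W `&` W' !=set0.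

Definition compatible (g h : set (set T)) : Prop := ~ cross g h.

Definition pants_decomposition (G : set (set (set T))) : Prop :=
  [/\ countable G,
      (forall g, G g -> nonperipheral_cut g),
      (forall g h, G g -> G h -> compatible g h),
      (forall g, nonperipheral_cut g -> ~ G g -> exists2 h, G h & cross h g)
    & (forall g, nonperipheral_cut g -> ~ G g ->
         finite_set [set h | G h /\ cross h g])].

End Cuts.

(* Main.v *)
From HB Require Import structures.
Require Import Defs.
From mathcomp Require Import all_boot all_order.
From mathcomp Require Import boolp classical_sets functions cardinality topology.
Local Open Scope classical_set_scope.

Section Helpers.
Context {T : topologicalType}.

Definition node (B : nat -> set T) (s : seq bool) : set T :=
  [set x | forall i, (i < size s)%N -> (B i x <-> nth false s i)].

Lemma node_rcons B s b :
  node B (rcons s b) = node B s `&` [set x | B (size s) x <-> b].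
Proof.
apply/seteqP; split => x /=.
- move=> H; split.
  + move=> i lti; have := H i; rewrite size_rcons nth_rcons lti; apply.
    exact: ltnW.
  + have := H (size s); rewrite size_rcons nth_rcons ltnn eqxx; apply.
    exact: ltnSn.
- move=> [H1 H2] i; rewrite size_rcons ltnS leq_eqVlt => /orP[/eqP->|lti].
  + by rewrite nth_rcons ltnn eqxx.
  + by rewrite nth_rcons lti; apply: H1.
Qed.

Lemma node_nil B : node B [::] = setT.
Proof. by apply/seteqP; split => x //= _ i. Qed.

Lemma node_clopen B s : (forall i, clopen (B i)) -> clopen (node B s).
Proof.
move=> cB; elim/last_ind: s => [|s b IH]; first by rewrite node_nil; exact: clopenT.
rewrite node_rcons; apply: clopenI => //.
have -> : [set x | B (size s) x <-> b] = if b then B (size s) else ~` B (size s).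
  apply/seteqP; split => x /=; case: b => /=.
  - by move=> [_ h]; apply: h.
  - by move=> [h _] /h.
  - by move=> h; split.
  - by move=> h; split => //.
by case: b => //; apply: (@clopenC _ _ set0).
Qed.

Lemma node_nested B s t :
  node B s `&` node B t = set0 \/ node B s `<=` node B t \/ node B t `<=` node B s.
Proof.
case: (pselect (exists i, [/\ (i < size s)%N, (i < size t)%N &
    nth false s i <> nth false t i])) => [[i [hs ht hne]]|nH].
  left; apply/seteqP; split => // x [xs xt]; apply: hne.
  move: (xs i hs) (xt i ht).
  case: (nth false s i); case: (nth false t i) => //= -[h1 h2] [h3 h4].
    by move: (h3 (h2 erefl)).
  by move: (h1 (h4 erefl)).
have E i : (i < size s)%N -> (i < size t)%N -> nth false s i = nth false t i.
  by move=> hs ht; apply: contrapT => hne; apply: nH; exists i.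
right; case: (leqP (size s) (size t)) => h.
- right => x xt i his; rewrite E //; last exact: leq_trans his h.
  by apply: xt; exact: leq_trans his h.
- left => x xs i hit; rewrite -E //; last exact: ltn_trans hit h.
  by apply: xs; exact: ltn_trans hit h.
Qed.


Lemma mixed_bound B j s (U V : set T) : B j = U -> (forall x, U x -> V x -> False) ->
  node B s `&` U !=set0 -> node B s `&` V !=set0 -> (size s <= j)%N.
Proof.
move=> BU dis [u [su Uu]] [v [sv Vv]]; rewrite leqNgt; apply/negP => lt.
move: (su j lt) (sv j lt); rewrite BU.
case: (nth false s j) => -[h1 h2] [h3 h4].
  by apply: (dis v) => //; apply: h4.
by move: (h1 Uu).
Qed.

End Helpers.

Lemma finite_size n : finite_set [set s : seq bool | (size s <= n)%N].
Proof.
elim: n => [|n IH].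
  have -> : [set s : seq bool | (size s <= 0)%N] = [set [::]].
    by apply/seteqP; split => s /=; [case: s | move->].
  exact: finite_set1.
apply: (@sub_finite_set _ _ ([set [::]] `|` ((cons true @` [set s : seq bool | (size s <= n)%N])
   `|` (cons false @` [set s : seq bool | (size s <= n)%N])))).
  move=> [|b s] /= h; first by left.
  by right; case: b; [left|right]; exists s.
rewrite !finite_setU; split; first exact: finite_set1.
by split; apply: finite_image.
Qed.

Definition pt_of {E : topologicalType} (a : E) : Type := E.
HB.instance Definition _ (E : topologicalType) (a : E) := Topological.on (pt_of a).
HB.instance Definition _ (E : topologicalType) (a : E) := isPointed.Build (pt_of a) a.

Lemma clopen_enum {E : topologicalType} (a : E) : compact [set: E] -> @second_countable E ->
  exists B : nat -> set E, (forall n, clopen (B n)) /\ (forall U, clopen U -> exists n, B n = U).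
Proof.
move=> cE sE.
have cc : countable (@clopen E) := @clopen_countable (pt_of a) cE sE.
have := cc; move=> /pfcard_geP [|[f]].
  by move=> /seteqP [/(_ setT) h _]; have := h clopenT.
exists f; split.
  by move=> n; apply: (@funS _ _ setT _ f n).
move=> U cU; have [n _ <-] := @surj _ _ setT _ f U cU; by exists n.
Qed.

Theorem mainTheorem5 (E : topologicalType) :
  @stone_space E -> @second_countable E ->
  (exists a b c d : E,
     [/\ a <> b, a <> c, a <> d & [/\ b <> c, b <> d & c <> d]]) ->
  exists G : set (set (set E)), pants_decomposition G.
Proof.
move=> [cE _ _] sE [a _].
have [B [cB enB]] := clopen_enum a cE sE.
pose f := fun s : seq bool => [set node B s; ~` node B s].
exists [set g | nonperipheral_cut g /\ exists s, g = f s].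
have bool3 : forall a b c : bool, a != b -> b <> c -> a = c by do 3 case.
split.
- apply: (sub_countable _ (countableP (@setT (seq bool)))).
  apply: card_le_trans (card_image_le f setT).
  by apply: subset_card_le => g [_ [s ->]]; exists s.
- by move=> g [].
- move=> g h [_ [s ->]] [_ [t ->]] cr.
  case: (node_nested B s t) => [I0|[st|ts]].
  + have := cr (node B s) (node B t) (or_introl erefl) (or_introl erefl).
    by rewrite I0 => -[x].
  + have [x [xs nxt]] := cr (node B s) (~` node B t) (or_introl erefl) (or_intror erefl).
    exact: nxt (st x xs).
  + have [x [nxs xt]] := cr (~` node B s) (node B t) (or_intror erefl) (or_introl erefl).
    exact: nxs (ts x xt).
- move=> g npg nG; have [[U [V [cU cV UV UVT eqg]]] two] := npg; subst g.
  have [j BU] := enB U cU.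
  have dis : forall x, U x -> V x -> False.
    by move=> x Ux Vx; have : (U `&` V) x by []; rewrite UV.
  have cov : forall x, U x \/ V x.
    by move=> x; have : [set: E] x by []; rewrite -UVT.
  have [u [_ [Uu _ _]]] := two U (or_introl erefl).
  have [v [_ [Vv _ _]]] := two V (or_intror erefl).
  pose mixed s := node B s `&` U !=set0 /\ node B s `&` V !=set0.
  have step1 : exists s, mixed s /\ forall b, ~ mixed (rcons s b).
    apply: contrapT => nH.
    have st : forall s, mixed s -> exists b, mixed (rcons s b).
      move=> s ms; apply: contrapT => nb; apply: nH; exists s; split => // b mb.
      by apply: nb; exists b.
    have all : forall k, exists s, mixed s /\ size s = k.
      elim => [|k [s [ms sk]]].
        by exists [::]; split => //; rewrite /mixed node_nil; split; [exists u|exists v].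
      have [b mb] := st s ms; exists (rcons s b); split => //.
      by rewrite size_rcons sk.
    have [s [[m1 m2] sk]] := all j.+1.
    by have := @mixed_bound _ B j s U V BU dis m1 m2; rewrite sk ltnn.
  have [s [[[u' [su' Uu']] [v' [sv' Vv']]] nch]] := step1.
  have child : forall x, node B s x -> node B (rcons s `[< B (size s) x >]) x.
    move=> x Px; rewrite node_rcons; split => //=; split.
      by move=> h; apply/asboolP.
    by move/asboolP.
  have CuU : forall x, node B (rcons s `[< B (size s) u' >]) x -> U x.
    move=> x cx; case: (cov x) => // Vx; exfalso; apply: (nch `[< B (size s) u' >]).
    by split; [exists u'; split => //; apply: child | exists x].
  have CvV : forall x, node B (rcons s `[< B (size s) v' >]) x -> V x.
    move=> x cx; case: (cov x) => // Ux; exfalso; apply: (nch `[< B (size s) v' >]).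
    by split; [exists x | exists v'; split => //; apply: child].
  have buv : `[< B (size s) u' >] <> `[< B (size s) v' >].
    move=> e; apply: (dis v') => //; apply: CuU; rewrite e; exact: child.
  have PU : forall x, node B s x -> U x -> node B (rcons s `[< B (size s) u' >]) x.
    move=> x Px Ux; have cx := child x Px.
    case: (boolP (`[< B (size s) x >] == `[< B (size s) u' >])) => [/eqP e|ne].
      by rewrite -e.
    exfalso; have e := bool3 _ _ _ ne buv.
    by apply: (dis x Ux); apply: CvV; rewrite -e.
  have PV : forall x, node B s x -> V x -> node B (rcons s `[< B (size s) v' >]) x.
    move=> x Px Vx; have cx := child x Px.
    case: (boolP (`[< B (size s) x >] == `[< B (size s) v' >])) => [/eqP e|ne].
      by rewrite -e.
    exfalso; have e := bool3 _ _ _ ne (nesym buv).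
    by apply: (dis x) => //; apply: CuU; rewrite -e.
  have childP : forall b x, node B (rcons s b) x -> node B s x.
    by move=> b x; rewrite node_rcons => -[].
  case: (pselect (nonperipheral_cut (f s) /\ cross (f s) [set U; V])) => [[nps crs]|nh].
    by exists (f s) => //; split => //; exists s.
  exfalso; apply: nG; split => //.
  have key : (forall x, ~ node B s x -> U x) \/ (forall x, ~ node B s x -> V x).
    apply: contrapT => nk.
    have [c [nPc nVc]] : exists c, ~ node B s c /\ ~ V c.
      case: (pselect (exists c, ~ node B s c /\ ~ V c)) => // nc; exfalso.
      by apply: nk; right => x nPx; apply: contrapT => nVx; apply: nc; exists x.
    have [d [nPd nUd]] : exists d, ~ node B s d /\ ~ U d.
      case: (pselect (exists d, ~ node B s d /\ ~ U d)) => // nc; exfalso.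
      by apply: nk; left => x nPx; apply: contrapT => nUx; apply: nc; exists x.
    have Uc : U c by case: (cov c).
    have Vd : V d by case: (cov d).
    apply: nh; split; first split.
    - exists (node B s), (~` node B s); split => //.
      + exact: node_clopen.
      + exact: (@clopenC _ _ set0 (node_clopen B s cB)).
      + exact: setICr.
      + exact: setUCr.
    - move=> W [->|->].
        exists u', v'; split => // e; apply: (dis v') => //; rewrite -e.
        by [].
      exists c, d; split => // e; apply: nUd; rewrite -e.
      by [].
    - move=> W W' [->|->] [->|->].
      + by exists u'.
      + by exists v'.
      + by exists c.
      + by exists d.
  case: key => [nPU|nPV].
  + have eV : V = node B (rcons s `[< B (size s) v' >]).
      apply/seteqP; split => x; last exact: CvV.
      move=> Vx; apply: PV => //; apply: contrapT => nPx.
      exact: (dis x (nPU x nPx) Vx).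
    exists (rcons s `[< B (size s) v' >]); rewrite /f -eV.
    apply/seteqP; split => W [->|->].
    * right; apply/seteqP; split => x /=.
        by move=> Ux Vx; apply: (dis x).
      by move=> nVx; case: (cov x).
    * by left.
    * by right.
    * left; apply/seteqP; split => x /=.
        by move=> nVx; case: (cov x).
      by move=> Ux Vx; apply: (dis x).
  + have eU : U = node B (rcons s `[< B (size s) u' >]).
      apply/seteqP; split => x; last exact: CuU.
      move=> Ux; apply: PU => //; apply: contrapT => nPx.
      exact: (dis x Ux (nPV x nPx)).
    exists (rcons s `[< B (size s) u' >]); rewrite /f -eU.
    apply/seteqP; split => W [->|->].
    * by left.
    * right; apply/seteqP; split => x /=.
        by move=> Vx Ux; apply: (dis x).
      by move=> nUx; case: (cov x).
    * by left.
    * right; apply/seteqP; split => x /=.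
        by move=> nUx; case: (cov x).
      by move=> Vx Ux; apply: (dis x).
- move=> g [[U [V [cU cV UV UVT ->]]] two] nG.
  have [j BU] := enB U cU.
  have dis : forall x, U x -> V x -> False.
    by move=> x Ux Vx; have : (U `&` V) x by []; rewrite UV.
  apply: (sub_finite_set _ (finite_image f (finite_size j))).
  move=> h [[_ [s ->]] cr]; exists s => //.
  apply: (@mixed_bound _ B j s U V BU dis).
    exact: (cr (node B s) U (or_introl erefl) (or_introl erefl)).
  exact: (cr (node B s) V (or_introl erefl) (or_intror erefl)).
Qed.
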